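(* Let $G$ be a graph with no induced subgraph isomorphic to $C_4$. Then $G$ is localizable if and only if every vertex of $G$ is contained in exactly one simplicial clique of $G$.
   Context: A clique is strong if it intersects every maximal independent set. A graph is localizable if its vertex set admits a partition into strong cliques. A clique $C$ of $G$ is simplicial if there is a vertex $v\in V(G)$ with $C=N[v]$, the closed neighborhood of $v$. *)

(* Defs.v *)
From mathcomp Require Import all_boot.
Set Implicit Arguments. Unset Strict Implicit. Unset Printing Implicit Defensive.

Section Graphs.
Variables (T : finType) (e : rel T).

Definition simple_graph : Prop := symmetric e /\ irreflexive e.

Definition closed_nbhd (v : T) : {set T} := [set u | (u == v) || e v u].

Definition is_clique (C : {set T}) : bool :=
  [forall x in C, forall y in C, (x != y) ==> e x y].

Definition is_independent (S : {set T}) : bool :=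
  [forall x in S, forall y in S, ~~ e x y].

Definition is_max_independent (S : {set T}) : bool :=
  maxset is_independent S.

Definition strong_clique (C : {set T}) : Prop :=
  is_clique C /\ forall S : {set T}, is_max_independent S -> C :&: S != set0.

Definition localizable : Prop :=
  exists P : {set {set T}}, partition P [set: T] /\ forall C, C \in P -> strong_clique C.

Definition simplicial_clique (C : {set T}) : Prop :=
  is_clique C /\ exists v : T, C = closed_nbhd v.

Definition has_induced_C4 : Prop :=
  exists a b c d : T,
    [/\ uniq [:: a; b; c; d],
        [&& e a b, e b c, e c d & e d a] &
        ~~ e a c && ~~ e b d].

End Graphs.

(* Main.v *)
Require Import Defs.
From mathcomp Require Import all_boot.

Section Aux.
Local Set Implicit Arguments.
Variables (T : finType) (e : rel T).
Hypothesis (esym : symmetric e) (eirr : irreflexive e).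

Lemma cn_mem v u : (u \in closed_nbhd e v) = (u == v) || e v u.
Proof. by rewrite inE. Qed.

Lemma clique_adj C x y : is_clique e C -> x \in C -> y \in C -> x != y -> e x y.
Proof.
move=> /forallP H xC yC nxy.
by have := H x; rewrite xC /= => /forallP /(_ y); rewrite yC nxy.
Qed.

Lemma indep_nadj S x y : is_independent e S -> x \in S -> y \in S -> ~~ e x y.
Proof.
move=> /forallP H xC yC.
by have := H x; rewrite xC /= => /forallP /(_ y); rewrite yC.
Qed.

Lemma simplicial_strong v : is_clique e (closed_nbhd e v) ->
  forall S, is_max_independent e S -> closed_nbhd e v :&: S != set0.
Proof.
move=> _ S /maxsetP [indS maxS].
apply/set0Pn.
case vS: (v \in S); first by exists v; rewrite inE cn_mem eqxx vS.
have : ~~ is_independent e (v |: S).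
  apply/negP => ind; have := maxS _ ind (subsetUr _ _) => eq.
  by move: vS; rewrite -eq setU11.
case/forallPn => x; rewrite negb_imply => /andP [xin /forallPn [y]].
rewrite negb_imply negbK => /andP [yin exy].
move: xin yin; rewrite !in_setU1 => /orP [/eqP xv | xS] /orP [/eqP yv | yS].
- by move: exy; rewrite xv yv eirr.
- by exists y; rewrite inE cn_mem -xv exy orbT yS.
- by exists x; rewrite inE cn_mem esym -yv exy orbT xS.
- by move: (indep_nadj indS xS yS); rewrite exy.
Qed.

Lemma nbhd_eq x y : is_clique e (closed_nbhd e x) -> is_clique e (closed_nbhd e y) ->
  y \in closed_nbhd e x -> closed_nbhd e x = closed_nbhd e y.
Proof.
move=> cx cy yx.
have xy : x \in closed_nbhd e y.
  by move: yx; rewrite !cn_mem eq_sym esym.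
have sub : forall a b, is_clique e (closed_nbhd e a) -> b \in closed_nbhd e a ->
    closed_nbhd e a \subset closed_nbhd e b.
  move=> a b ca ba; apply/subsetP => z za; rewrite cn_mem.
  case: (eqVneq z b) => [->|nzb]; first by [].
  by rewrite esym (clique_adj ca za ba nzb) orbT.
by apply/eqP; rewrite eqEsubset !sub.
Qed.

Hypothesis noC4 : ~ has_induced_C4 e.

Definition domC (C S : {set T}) := [set a in C | [exists s in S, e a s]].

Lemma strong_simplicial C : strong_clique e C -> simplicial_clique e C.
Proof.
move=> [cC strC]; split => //.
case: (boolP [exists v in C, closed_nbhd e v \subset C]).
  case/exists_inP => v vC sub; exists v; apply/eqP; rewrite eqEsubset sub andbT.
  apply/subsetP => z zC; rewrite cn_mem.
  by case: (eqVneq z v) => [->|nzv] //; rewrite esym (clique_adj cC zC vC nzv) orbT.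
move/exists_inPn => nsimp; exfalso.
have nb : forall a, a \in C -> exists2 u, u \notin C & e a u.
  move=> a aC; have := nsimp a aC; case/subsetPn => u; rewrite cn_mem => /orP [/eqP ->|eau] uC.
    by rewrite aC in uC.
  by exists u.
pose P S := is_independent e S && (S \subset ~: C).
have P0 : P set0.
  by rewrite /P sub0set andbT; apply/forall_inP => x; rewrite inE.
case: (@arg_maxnP _ set0 P (fun S => #|domC C S|) P0) => S /andP [indS SC] maxS.
have domall : domC C S = C.
  apply/eqP; rewrite eqEsubset; apply/andP; split.
    by apply/subsetP => a; rewrite inE => /andP [].
  apply/subsetP => a aC; apply/negPn/negP => anS.
  have [u uC eau] := nb a aC.
  pose S' := u |: [set s in S | ~~ e u s].
  have PS' : P S'.
    apply/andP; split.
      apply/forall_inP => x xS; apply/forall_inP => y yS.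
      move: xS yS; rewrite !in_setU1 !inE => /orP [/eqP ->|/andP [xS nux]] /orP [/eqP ->|/andP [yS nuy]].
      + by rewrite eirr.
      + by [].
      + by rewrite esym.
      + exact: indep_nadj indS xS yS.
    apply/subsetP => x; rewrite in_setU1 inE => /orP [/eqP ->|/andP [xS _]]; first by rewrite inE.
    exact: (subsetP SC).
  have : #|domC C S'| <= #|domC C S| := maxS _ PS'; rewrite leqNgt => /negP; apply.
  apply: (@proper_card _ (domC C S) (domC C S')); rewrite properE; apply/andP; split.
    apply/subsetP => b; rewrite !inE => /andP [bC /exists_inP [s sS ebs]].
    rewrite bC /=; apply/exists_inP.
    case eus: (e u s); last by exists s; rewrite // in_setU1 inE sS eus orbT.
    exists u; first by rewrite setU11.
    apply/negPn/negP => nbu; apply: noC4.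
    have sC : s \notin C by have := subsetP SC s sS; rewrite inE.
    have nab : a != b by apply/eqP => ab; move: anS; rewrite ab inE bC /=; apply/negP/negPn/exists_inP; exists s.
    have nas : ~~ e a s by apply/negP => eas; move: anS; rewrite inE aC /=; apply/negP/negPn/exists_inP; exists s.
    exists u, a, b, s; split.
    - have nus : u != s by apply/eqP => us; move: eus; rewrite us eirr.
      have nua : u != a by apply/eqP => h; move: uC; rewrite h aC.
      have nub : u != b by apply/eqP => h; move: uC; rewrite h bC.
      have nas' : a != s by apply/eqP => h; move: sC; rewrite -h aC.
      have nbs : b != s by apply/eqP => h; move: sC; rewrite -h bC.
      by rewrite /= !inE !negb_or nus nua nub nas' nbs nab.
    - rewrite esym eau (clique_adj cC aC bC nab) /=; apply/andP; split => //; by rewrite esym.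
    - by rewrite esym nbu nas.
  apply/subsetPn; exists a; last by [].
  by rewrite inE aC /=; apply/exists_inP; exists u; rewrite ?setU11.
have [M maxM SM] := maxset_exists (P := is_independent e) indS.
have := strC M maxM; apply/negP; rewrite negbK; apply/eqP/setP => a.
rewrite !inE; apply/negP => /andP [aC aM].
move: aC; rewrite -domall inE => /andP [_ /exists_inP [s sS eas]].
by move: (indep_nadj (maxsetp maxM) aM (subsetP SM s sS)); rewrite eas.
Qed.

End Aux.

Theorem mainTheorem10 (T : finType) (e : rel T) :
  simple_graph e -> ~ has_induced_C4 e ->
  (localizable e <->
   forall v : T, exists! C : {set T}, simplicial_clique e C /\ v \in C).
Proof.
move=> [esym eirr] noC4; split.
- move=> [P [partP strP]] v.
  have simpP : forall C, C \in P -> simplicial_clique e C.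
    by move=> C CP; apply: strong_simplicial => //; apply: strP.
  have inP : forall C, simplicial_clique e C -> C \in P.
    move=> C [cC [x Cx]]; subst C.
    have : x \in cover P by rewrite (cover_partition partP) inE.
    case/bigcupP => B BP xB.
    have [cB [w Bw]] := simpP B BP.
    rewrite Bw in xB cB.
    rewrite (@nbhd_eq _ _ esym x w) //.
      by rewrite -Bw.
    by move: xB; rewrite !cn_mem eq_sym esym.
  have : v \in cover P by rewrite (cover_partition partP) inE.
  case/bigcupP => B BP vB.
  exists B; split; first by split => //; apply: simpP.
  move=> C [sC vC]; have CP := inP C sC.
  have triv := partition_trivIset partP.
  by rewrite -(def_pblock triv BP vB) (def_pblock triv CP vC).
- move=> H.
  exists [set C | is_clique e C && [exists v, C == closed_nbhd e v]]; split.
    apply/and3P; split.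
    + apply/eqP/setP => v; rewrite inE /cover; have [C [[[cC [w Cw]] vC] _]] := H v.
      apply/bigcupP; exists C => //; rewrite inE cC /=; apply/existsP; exists w; exact/eqP.
    + apply/trivIsetP => A B; rewrite !inE => /andP [cA /existsP [a /eqP Aa]] /andP [cB /existsP [b /eqP Bb]] nAB.
      apply/pred0P => x /=; apply/negP => /andP [xA xB].
      have [C [_ uC]] := H x.
      have eA := uC A (conj (conj cA (ex_intro _ a Aa)) xA).
      have eB := uC B (conj (conj cB (ex_intro _ b Bb)) xB).
      by move: nAB; rewrite -eA -eB eqxx.
    + rewrite inE; apply/negP => /andP [_ /existsP [v /eqP h]].
      by move/setP: h => /(_ v); rewrite inE cn_mem eqxx.
  move=> C; rewrite inE => /andP [cC /existsP [v /eqP Cv]]; split => //.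
  rewrite Cv; apply: simplicial_strong => //; by rewrite -Cv.
Qed.
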